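(* Let $d\ge2$, $q\ge2$ and $1\le p\le q-1$ with $\gcd(p,q)=1$. For $k\ge1$ let $N_k$ be the number of $\sigma_d$-rotational sets $A\subset\mathbb{T}$ that are the union of exactly $k$ distinct $\sigma_d$-orbits and have rotation number $p/q$ (that is, $|A|=kq$ and, listing $A=\{u_0<\dots<u_{kq-1}\}$, $\sigma_d(u_j)=u_{j+kp}$ for all $j\in\mathbb{Z}/kq\mathbb{Z}$). Then $$N_1=\binom{d-2+q}{d-2},\qquad N_k=\binom{d-2+kq}{d-2}-\sum_{j=1}^{k-1}\binom{k-1}{j-1}N_j\quad\text{for }2\le k\le d-1.$$
   Context: $\mathbb{T}=\mathbb{R}/\mathbb{Z}$, ordered by representatives in $[0,1)$; $\sigma_d(t)=dt$. A finite set $\{u_0<\dots<u_{N-1}\}\subset\mathbb{T}$ (indices in $\mathbb{Z}/N\mathbb{Z}$) is $\sigma_d$-rotational if for some fixed $0\ne P\in\mathbb{Z}/N\mathbb{Z}$, $\sigma_d(u_j)=u_{j+P}$ for all $j$; its rotation number is $P/N$. *)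

(* Defs.v *)
(* the circle T = R/Z is represented by [0,1) with the
   concrete reals R; sigma_d(t) = frac(d t). *)
From Stdlib Require Import Reals Lia Arith List.
Open Scope R_scope.

Definition sigma (d : nat) (t : R) : R := frac_part (INR d * t).

Fixpoint binom (n k : nat) : nat :=
  match n, k with
  | _, O => 1%nat
  | O, S _ => 0%nat
  | S n', S k' => (binom n' k' + binom n' (S k'))%nat
  end.

(* A finite subset of T is represented canonically by the strictly increasing
   list u_0 < ... < u_{N-1} of its representatives in [0,1).
   [rot_set_k d p q k u] : u lists a sigma_d-rotational set which is the union
   of exactly k orbits with rotation number p/q, i.e. |A| = k q and
   sigma_d(u_j) = u_{j + k p mod k q} for all j. *)
Definition rot_set_k (d p q k : nat) (u : list R) : Prop :=
  length u = (k * q)%nat /\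
  (forall j, (j < length u)%nat -> 0 <= nth j u 0 < 1) /\
  (forall i j, (i < j)%nat -> (j < length u)%nat -> nth i u 0 < nth j u 0) /\
  (forall j, (j < length u)%nat ->
     sigma d (nth j u 0) = nth ((j + k * p) mod (k * q)) u 0).

Definition has_count (P : list R -> Prop) (n : nat) : Prop :=
  exists L : list (list R),
    NoDup L /\ (forall u, In u L <-> P u) /\ length L = n.

Definition rec_sum (N : nat -> nat) (k : nat) : nat :=
  fold_right Nat.add 0%nat
    (map (fun j => (binom (k - 1) (j - 1) * N j)%nat) (seq 1 (k - 1))).

(* Main.v *)
Require Import Defs.
From Stdlib Require Import Reals Lia Lra Arith List Classical.

Section Part0.
Local Open Scope nat_scope.

Fixpoint sumn (f : nat -> nat) (n : nat) : nat :=
  match n with O => O | S m => (sumn f m + f m)%nat end.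

Lemma sumn_ext f g n : (forall i, (i < n)%nat -> f i = g i) -> sumn f n = sumn g n.
Proof. induction n; simpl; intros H; auto. rewrite IHn, H; auto. Qed.

Lemma sumn_add f g n : sumn (fun i => f i + g i)%nat n = (sumn f n + sumn g n)%nat.
Proof. induction n; simpl; lia. Qed.

Lemma sumn_mul_l c f n : (c * sumn f n)%nat = sumn (fun i => c * f i)%nat n.
Proof. induction n; simpl; lia. Qed.

Lemma sumn_shift f n : sumn f (S n) = (f 0 + sumn (fun i => f (S i)) n)%nat.
Proof. induction n; simpl in *; lia. Qed.

Lemma sumn_swap (f : nat -> nat -> nat) n m :
  sumn (fun i => sumn (fun j => f i j) m) n = sumn (fun j => sumn (fun i => f i j) n) m.
Proof.
  induction n; simpl.
  - induction m; simpl; lia.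
  - rewrite IHn. rewrite <- sumn_add. reflexivity.
Qed.

Lemma sumn_add_range f a b : sumn f (a + b) = (sumn f a + sumn (fun i => f (a + i)) b)%nat.
Proof. induction b; simpl; [rewrite Nat.add_0_r; lia|]. rewrite Nat.add_succ_r. simpl. rewrite IHb. lia. Qed.

Lemma sumn_block h k q :
  sumn h (q * k) = sumn (fun b => sumn (fun r => h (b * k + r)%nat) k) q.
Proof.
  induction q; simpl; auto.
  rewrite Nat.add_comm, sumn_add_range, IHq. f_equal.
Qed.

Lemma sumn_le f g n : (forall i, (i < n)%nat -> f i <= g i)%nat -> (sumn f n <= sumn g n)%nat.
Proof. induction n; simpl; intros H; auto. specialize (IHn (fun i Hi => H i ltac:(lia))). specialize (H n ltac:(lia)). lia. Qed.

Lemma sumn_mono f a b : (a <= b)%nat -> (sumn f a <= sumn f b)%nat.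
Proof. intros H. replace b with (a + (b - a))%nat by lia. rewrite sumn_add_range. lia. Qed.

Lemma sumn_pos f n : (0 < sumn f n)%nat -> exists i, (i < n)%nat /\ (0 < f i)%nat.
Proof.
  induction n; simpl; intros H; [lia|].
  destruct (f n) eqn:E.
  - destruct IHn as [i [Hi Hf]]; [lia|]. exists i; split; [lia|auto].
  - exists n. split; lia.
Qed.

Lemma sumn_zero f n : (forall i, (i < n)%nat -> f i = 0%nat) -> sumn f n = 0%nat.
Proof. intros H. rewrite (sumn_ext f (fun _ => 0%nat)); auto. clear; induction n; simpl; lia. Qed.

Lemma list_sum_nth l : list_sum l = sumn (fun i => nth i l 0%nat) (length l).
Proof.
  induction l; auto. change (list_sum (a::l)) with (a + list_sum l)%nat.
  change (length (a::l)) with (S (length l)). rewrite sumn_shift. rewrite IHl. reflexivity.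
Qed.

Lemma list_sum_map_seq f a b : list_sum (map f (seq a b)) = sumn (fun i => f (a + i)%nat) b.
Proof.
  revert a; induction b; intros a; auto.
  change (seq a (S b)) with (a :: seq (S a) b). change (list_sum (map f (a :: seq (S a) b))) with (f a + list_sum (map f (seq (S a) b)))%nat.
  rewrite IHb, sumn_shift. rewrite Nat.add_0_r.
  f_equal. apply sumn_ext. intros; f_equal; lia.
Qed.

Lemma NoDup_flat_map {A B} (f : A -> list B) l :
  NoDup l -> (forall x, In x l -> NoDup (f x)) ->
  (forall x y b, In x l -> In y l -> In b (f x) -> In b (f y) -> x = y) ->
  NoDup (flat_map f l).
Proof.
  induction l as [|x l IH]; simpl; intros Hl Hf Hd; [constructor|].
  inversion Hl as [|? ? Hx Hl']; subst.
  apply NoDup_app.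
  - apply Hf; auto.
  - apply IH; auto. intros x0 y b ? ? ? ?. apply (Hd x0 y b); auto.
  - intros b H1 H2. apply in_flat_map in H2. destruct H2 as [y [Hy Hb]].
  assert (x = y) by (apply (Hd x y b); auto). subst. contradiction.
Qed.

Lemma NoDup_map_inj {A B} (f : A -> B) l :
  NoDup l -> (forall x y, In x l -> In y l -> f x = f y -> x = y) -> NoDup (map f l).
Proof.
  induction l as [|x l IH]; simpl; intros Hl Hi; constructor.
  - inversion Hl as [|? ? Hx Hl']; subst. intros Hin. apply in_map_iff in Hin. destruct Hin as [y [Hy Hy']].
    assert (y = x) by (apply Hi; auto). subst; contradiction.
  - inversion Hl as [|? ? Hx Hl']; subst. apply IH; auto.
Qed.

Lemma same_length {A} (l1 l2 : list A) :
  NoDup l1 -> NoDup l2 -> (forall x, In x l1 <-> In x l2) -> length l1 = length l2.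
Proof.
  intros H1 H2 H. apply Nat.le_antisymm; apply NoDup_incl_length; auto; intros x; apply H.
Qed.

Fixpoint comps (L s : nat) : list (list nat) :=
  match L with
  | O => if Nat.eqb s 0 then (nil :: nil) else nil
  | S L' => flat_map (fun t => map (cons t) (comps L' (s - t))) (seq 0 (S s))
  end.

Lemma comps_spec L s x : In x (comps L s) <-> length x = L /\ list_sum x = s.
Proof.
  revert s x; induction L; intros s x.
  - simpl. destruct (Nat.eqb_spec s 0); subst; simpl.
    + split; [intros [<-|[]]; simpl; auto|]. intros [H1 H2]. destruct x; simpl in *; auto; lia.
    + split; [intros []|]. intros [H1 H2]. destruct x; simpl in *; lia.
  - change (comps (S L) s) with (flat_map (fun t => map (cons t) (comps L (s - t))) (seq 0 (S s))).
    rewrite in_flat_map. split.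
    + intros [t [Ht Hx]]. apply in_map_iff in Hx. destruct Hx as [y [<- Hy]].
      apply IHL in Hy. apply in_seq in Ht. simpl. lia.
    + intros [H1 H2]. destruct x as [|t y]; [simpl in *; lia|].
      simpl in H1, H2.
      exists t. split; [apply in_seq; lia|]. apply in_map. apply IHL. split; lia.
Qed.

Lemma comps_nodup L s : NoDup (comps L s).
Proof.
  revert s; induction L; intros s.
  - simpl. destruct (Nat.eqb s 0); repeat constructor; auto.
  - change (comps (S L) s) with (flat_map (fun t => map (cons t) (comps L (s - t))) (seq 0 (S s))).
    apply NoDup_flat_map.
    + apply seq_NoDup.
    + intros t _. apply NoDup_map_inj; auto. intros x y _ _ H; inversion H; auto.
    + intros x y b _ _ H1 H2. apply in_map_iff in H1, H2.
      destruct H1 as [a1 [<- _]]. destruct H2 as [a2 [E _]]. inversion E; auto.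
Qed.

Definition V L s := length (comps L s).

Lemma V_S L s : V (S L) s = sumn (fun t => V L (s - t)) (S s).
Proof.
  unfold V. change (comps (S L) s) with (flat_map (fun t => map (cons t) (comps L (s - t))) (seq 0 (S s))). rewrite length_flat_map, list_sum_map_seq.
  apply sumn_ext. intros i _. rewrite length_map. reflexivity.
Qed.

Lemma V_0 L : V L 0 = 1%nat.
Proof.
  unfold V. assert (H: comps L 0 = (repeat 0%nat L :: nil)).
  { induction L; simpl; auto. rewrite IHL. reflexivity. }
  rewrite H; auto.
Qed.

Lemma list_sum_app' l1 l2 : list_sum (l1 ++ l2) = (list_sum l1 + list_sum l2)%nat.
Proof. induction l1; simpl; auto. unfold list_sum in *; simpl. rewrite IHl1. lia. Qed.

Lemma V_conv L1 L2 s :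
  V (L1 + L2) s = sumn (fun t => V L1 t * V L2 (s - t))%nat (S s).
Proof.
  set (C := flat_map (fun t => flat_map (fun x1 => map (app x1) (comps L2 (s - t))) (comps L1 t)) (seq 0 (S s))).
  assert (HC : length C = sumn (fun t => V L1 t * V L2 (s - t))%nat (S s)).
  { unfold C. rewrite length_flat_map, list_sum_map_seq. apply sumn_ext. intros t _.
    rewrite (flat_map_constant_length (c := V L2 (s - (0 + t)))). reflexivity.
    intros x _. rewrite length_map. reflexivity. }
  rewrite <- HC. unfold V. apply same_length.
  - apply comps_nodup.
  - unfold C. apply NoDup_flat_map.
    + apply seq_NoDup.
    + intros t _. apply NoDup_flat_map.
      * apply comps_nodup.
      * intros x1 _. apply NoDup_map_inj. apply comps_nodup. intros x y _ _ H. apply app_inv_head in H; auto.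
      * intros x1 y1 b Hx Hy Hb1 Hb2. apply comps_spec in Hx, Hy.
        apply in_map_iff in Hb1, Hb2. destruct Hb1 as [z1 [<- _]]. destruct Hb2 as [z2 [E _]].
        apply (f_equal (firstn L1)) in E. rewrite !firstn_app in E.
        replace (L1 - length y1)%nat with 0%nat in E by lia. replace (L1 - length x1)%nat with 0%nat in E by lia.
        rewrite !firstn_O, !app_nil_r in E. destruct Hx as [Hx _]; destruct Hy as [Hy _].
        rewrite <- Hx in E at 2. rewrite <- Hy in E at 1. rewrite !firstn_all in E. auto.
    + intros t1 t2 b _ _ H1 H2. apply in_flat_map in H1, H2.
      destruct H1 as [x1 [Hx1 H1]]. destruct H2 as [x2 [Hx2 H2]].
      apply in_map_iff in H1, H2. destruct H1 as [y1 [<- Hy1]]. destruct H2 as [y2 [E Hy2]].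
      apply comps_spec in Hx1, Hx2, Hy1, Hy2.
      apply (f_equal (firstn L1)) in E. rewrite !firstn_app in E.
      replace (L1 - length x1)%nat with 0%nat in E by lia. replace (L1 - length x2)%nat with 0%nat in E by lia.
      rewrite !firstn_O, !app_nil_r in E. destruct Hx1 as [Hx1 Ht1]; destruct Hx2 as [Hx2 Ht2].
      rewrite <- Hx1 in E at 2. rewrite <- Hx2 in E at 1. rewrite !firstn_all in E. subst. auto.
  - intros x. rewrite comps_spec. unfold C. rewrite in_flat_map. split.
    + intros [H1 H2]. exists (list_sum (firstn L1 x)). split.
      * apply in_seq. rewrite <- (firstn_skipn L1 x) in H2. rewrite list_sum_app' in H2. lia.
      * apply in_flat_map. exists (firstn L1 x). split.
        -- apply comps_spec. rewrite length_firstn. split; auto. lia.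
        -- rewrite <- (firstn_skipn L1 x) at 1. apply in_map. apply comps_spec.
           rewrite length_skipn. split; [lia|]. rewrite <- (firstn_skipn L1 x) in H2. rewrite list_sum_app' in H2. lia.
    + intros [t [Ht H]]. apply in_flat_map in H. destruct H as [x1 [Hx1 H]].
      apply in_map_iff in H. destruct H as [x2 [<- Hx2]]. apply comps_spec in Hx1, Hx2.
      apply in_seq in Ht. rewrite length_app, list_sum_app'. lia.
Qed.

Lemma binom_gt n k : (n < k)%nat -> binom n k = 0%nat.
Proof.
  revert k; induction n; intros k H; destruct k; simpl; try lia; auto.
  rewrite !IHn; lia.
Qed.

Lemma V_zero_S s : V 0 (S s) = 0%nat.
Proof. reflexivity. Qed.

Lemma V_rec L s : V (S L) (S s) = (V L (S s) + V (S L) s)%nat.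
Proof.
  rewrite !V_S. rewrite (sumn_shift _ (S s)). rewrite Nat.sub_0_r. f_equal.
Qed.

Lemma stars_bars L s : V (S L) s = binom (s + L) s.
Proof.
  revert L; induction s; intros L.
  - rewrite V_0. destruct L; reflexivity.
  - induction L.
    + rewrite V_rec, V_zero_S, IHs. simpl. rewrite Nat.add_0_r. rewrite (binom_gt s (S s)); lia.
    + rewrite V_rec, IHL, IHs.
      replace (S s + S L)%nat with (S (s + S L)) by lia. simpl binom at 3.
      replace (s + S L)%nat with (S s + L)%nat by lia. lia.
Qed.

Fixpoint Gs (q a s : nat) : list (list (list nat) * list nat) :=
  match a with
  | O => map (fun f => (nil, f)) (comps (S q) s)
  | S a' => flat_map (fun t => flat_map (fun g => map (fun pr => (g :: fst pr, snd pr)) (Gs q a' (s - t))) (comps q t)) (seq 1 s)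
  end.

Definition Gpred (q a s : nat) (x : list (list nat) * list nat) : Prop :=
  length (fst x) = a /\ (forall g, In g (fst x) -> length g = q /\ (1 <= list_sum g)%nat) /\
  length (snd x) = S q /\ (list_sum (map list_sum (fst x)) + list_sum (snd x))%nat = s.

Lemma Gs_spec q a s x : In x (Gs q a s) <-> Gpred q a s x.
Proof.
  revert s x; induction a; intros s x; unfold Gpred.
  - change (Gs q 0 s) with (map (fun f => (@nil (list nat), f)) (comps (S q) s)). rewrite in_map_iff. split.
    + intros [f [<- Hf]]. apply comps_spec in Hf. cbn [fst snd length map list_sum fold_right]. split; auto. split; [intros g []|]. split; [tauto|]. unfold list_sum in *; simpl in *; lia.
    + destruct x as [gs f]. cbn [fst snd]. intros [H1 [_ [H3 H4]]]. destruct gs; [|simpl in H1; lia].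
      simpl in H4.
      exists f. split; auto. apply comps_spec. split; auto.
  - change (Gs q (S a) s) with (flat_map (fun t => flat_map (fun g => map (fun pr => (g :: fst pr, snd pr)) (Gs q a (s - t))) (comps q t)) (seq 1 s)).
    rewrite in_flat_map. split.
    + intros [t [Ht H]]. apply in_seq in Ht. apply in_flat_map in H. destruct H as [g [Hg H]].
      apply in_map_iff in H. destruct H as [[gs f] [<- Hpr]]. apply IHa in Hpr. unfold Gpred in Hpr.
      apply comps_spec in Hg. simpl in *. destruct Hpr as [H1 [H2 [H3 H4]]].
      split; [lia|]. split; [|split; [auto|lia]].
      intros g' [<-|Hg']; [lia|auto].
    + destruct x as [gs f]. simpl. intros [H1 [H2 [H3 H4]]]. destruct gs as [|g gs]; simpl in *; [lia|].
      destruct (H2 g (or_introl eq_refl)) as [Hg1 Hg2].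
      exists (list_sum g). split; [apply in_seq; lia|]. apply in_flat_map. exists g.
      split; [apply comps_spec; auto|]. apply in_map_iff. exists (gs, f). split; auto.
      apply IHa. unfold Gpred; simpl. split; [lia|]. split; [intros; apply H2; auto|]. split; auto. lia.
Qed.

Lemma Gs_nodup q a s : NoDup (Gs q a s).
Proof.
  revert s; induction a; intros s.
  - change (Gs q 0 s) with (map (fun f => (@nil (list nat), f)) (comps (S q) s)). apply NoDup_map_inj. apply comps_nodup. intros x y _ _ H; inversion H; auto.
  - change (Gs q (S a) s) with (flat_map (fun t => flat_map (fun g => map (fun pr => (g :: fst pr, snd pr)) (Gs q a (s - t))) (comps q t)) (seq 1 s)).
    apply NoDup_flat_map.
    + apply seq_NoDup.
    + intros t _. apply NoDup_flat_map.
      * apply comps_nodup.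
      * intros g _. apply NoDup_map_inj; auto. intros [x1 x2] [y1 y2] _ _ H. simpl in H. inversion H; auto.
      * intros g1 g2 b _ _ H1 H2. apply in_map_iff in H1, H2. destruct H1 as [z1 [<- _]]. destruct H2 as [z2 [E _]].
        inversion E; auto.
    + intros t1 t2 b _ _ H1 H2. apply in_flat_map in H1, H2.
      destruct H1 as [g1 [Hg1 H1]]. destruct H2 as [g2 [Hg2 H2]].
      apply in_map_iff in H1, H2. destruct H1 as [z1 [<- _]]. destruct H2 as [z2 [E _]].
      inversion E; subst. apply comps_spec in Hg1, Hg2. lia.
Qed.

Definition G q a s := length (Gs q a s).

Lemma G_0 q s : G q 0 s = V (S q) s.
Proof. unfold G, V. change (Gs q 0 s) with (map (fun f => (@nil (list nat), f)) (comps (S q) s)). rewrite length_map. reflexivity. Qed.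

Lemma G_S q a s : G q (S a) s = sumn (fun t => V q (S t) * G q a (s - S t))%nat s.
Proof.
  unfold G. change (Gs q (S a) s) with (flat_map (fun t => flat_map (fun g => map (fun pr => (g :: fst pr, snd pr)) (Gs q a (s - t))) (comps q t)) (seq 1 s)).
  rewrite length_flat_map, list_sum_map_seq. apply sumn_ext. intros t _.
  rewrite (flat_map_constant_length (c := length (Gs q a (s - (1 + t))))).
  - reflexivity.
  - intros x _. rewrite length_map. reflexivity.
Qed.

Lemma G_identity q a s :
  V (a * q + S q) s = sumn (fun i => binom a i * G q i s)%nat (S a).
Proof.
  revert s; induction a; intros s.
  - simpl. rewrite G_0. lia.
  - replace (S a * q + S q)%nat with (q + (a * q + S q))%nat by lia.
    rewrite V_conv, sumn_shift, V_0, Nat.sub_0_r.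
    rewrite (sumn_ext _ (fun t => sumn (fun i => binom a i * (V q (S t) * G q i (s - S t)))%nat (S a))).
    2:{ intros t _. rewrite IHa, sumn_mul_l. apply sumn_ext. intros; lia. }
    rewrite sumn_swap.
    rewrite (sumn_ext (fun j => sumn _ s) (fun i => binom a i * G q (S i) s)%nat).
    2:{ intros i _. rewrite G_S, sumn_mul_l. reflexivity. }
    rewrite IHa.
    rewrite (sumn_shift (fun i => binom (S a) i * G q i s)%nat (S a)).
    rewrite (sumn_ext (fun i => binom (S a) (S i) * G q (S i) s)%nat
       (fun i => binom a i * G q (S i) s + binom a (S i) * G q (S i) s)%nat).
    2:{ intros; simpl; lia. }
    rewrite sumn_add. rewrite (sumn_shift (fun i => binom a i * G q i s)%nat a).
    change (sumn (fun i : nat => binom a (S i) * G q (S i) s)%nat (S a)) with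
      (sumn (fun i : nat => binom a (S i) * G q (S i) s)%nat a + binom a (S a) * G q (S a) s)%nat.
    rewrite (binom_gt a (S a)) by lia. replace (binom (S a) 0) with 1%nat by reflexivity.
    replace (binom a 0) with 1%nat by (destruct a; reflexivity). lia.
Qed.

Fixpoint val (d : nat) (w : nat -> nat) (L : nat) : nat :=
  match L with O => O | S L' => (val d w L' * d + w L')%nat end.

Lemma val_ext d w w' L : (forall i, (i < L)%nat -> w i = w' i) -> val d w L = val d w' L.
Proof. induction L; simpl; intros H; auto. rewrite IHL, H; auto. Qed.

Lemma val_front d w L : val d w (S L) = (w 0 * d ^ L + val d (fun i => w (S i)) L)%nat.
Proof.
  induction L; simpl; [lia|]. simpl in IHL. rewrite IHL. nia.
Qed.

Lemma val_bound d w L : (1 <= d)%nat -> (forall i, (i < L)%nat -> w i <= d - 1)%nat -> (val d w L + 1 <= d ^ L)%nat.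
Proof.
  intros Hd; induction L; simpl; intros H; [lia|].
  specialize (IHL (fun i Hi => H i ltac:(lia))). specialize (H L ltac:(lia)). nia.
Qed.

Lemma val_bound2 d w L : (2 <= d)%nat -> (forall i, (i < L)%nat -> w i <= d - 1)%nat ->
  (exists i, (i < L)%nat /\ (w i <= d - 2)%nat) -> (val d w L + 2 <= d ^ L)%nat.
Proof.
  intros Hd; induction L; simpl; intros H [i [Hi Hw]]; [lia|].
  assert (HB := val_bound d w L ltac:(lia) (fun i Hi => H i ltac:(lia))).
  destruct (Nat.eq_dec i L).
  - subst i. assert (val d w L * d + d <= d ^ L * d)%nat by nia. lia.
  - assert (IH : (val d w L + 2 <= d ^ L)%nat).
    { apply IHL. intros j Hj; apply H; lia. exists i; split; [lia|auto]. }
    specialize (H L ltac:(lia)). assert (val d w L * d + 2 * d <= d ^ L * d)%nat by nia. lia.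
Qed.

Lemma val_lex d a b L m : (1 <= d)%nat ->
  (forall i, (i < L)%nat -> a i <= d - 1 /\ b i <= d - 1)%nat -> (m <= L)%nat ->
  (forall i, (i < m)%nat -> a i <= b i)%nat -> (exists i, (i < m)%nat /\ (a i < b i)%nat) ->
  (val d a L < val d b L)%nat.
Proof.
  intros Hd. revert a b L; induction m; intros a b L Hab HmL Hle [i [Hi Hlt]]; [lia|].
  destruct L as [|L]; [lia|].
  rewrite !val_front.
  assert (B1 := val_bound d (fun i => a (S i)) L Hd (fun i Hi => proj1 (Hab (S i) ltac:(lia)))).
  destruct (Nat.eq_dec (a 0) (b 0)) as [E|E].
  - destruct i as [|i]; [lia|].
    assert (val d (fun i => a (S i)) L < val d (fun i => b (S i)) L)%nat.
    { apply (IHm _ _ L); try lia.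
      - intros j Hj; apply Hab; lia.
      - intros j Hj; apply Hle; lia.
      - exists i; split; [lia|auto]. }
    rewrite E. lia.
  - assert (a 0 < b 0)%nat by (specialize (Hle 0%nat ltac:(lia)); lia).
    assert (a 0 * d ^ L + d ^ L <= b 0 * d ^ L)%nat by nia. lia.
Qed.

Lemma val_shift d w L : (1 <= d)%nat -> w (S L) = w 0 ->
  (d * val d w (S L) + w 0 = val d (fun i => w (S i)) (S L) + w 0 * d ^ (S L))%nat.
Proof.
  intros Hd Hw. rewrite val_front. simpl val. rewrite Hw. simpl Nat.pow. nia.
Qed.

Lemma modk_orbit k q p j i : 0 < k -> 0 < q ->
  ((j + i * (k * p)) mod (k * q)) mod k = j mod k.
Proof.
  intros Hk Hq. rewrite Nat.Div0.mod_mul_r.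
  rewrite (Nat.mul_comm k (((j + i * (k * p)) / k) mod q)), Nat.Div0.mod_add, Nat.Div0.mod_mod.
  replace (i * (k * p)) with ((i * p) * k) by lia. rewrite Nat.Div0.mod_add. reflexivity.
Qed.

Lemma mod_succ x n : 0 < n -> x mod n <> n - 1 -> (x + 1) mod n = x mod n + 1.
Proof.
  intros Hn H. rewrite (Nat.div_mod_eq x n) at 1.
  assert (x mod n < n) by (apply Nat.mod_upper_bound; lia).
  replace (n * (x / n) + x mod n + 1) with ((x mod n + 1) + (x / n) * n) by lia.
  rewrite Nat.Div0.mod_add. apply Nat.mod_small. lia.
Qed.

Lemma mod_add_idem x P n : (x mod n + P) mod n = (x + P) mod n.
Proof. apply Nat.Div0.add_mod_idemp_l. Qed.

Lemma mod_period k q p j : (j + q * (k * p)) mod (k * q) = j mod (k * q).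
Proof. replace (q * (k * p)) with (p * (k * q)) by lia. apply Nat.Div0.mod_add. Qed.

Lemma orbit_solve k q p j a : 0 < k -> 0 < p -> 0 < q -> Nat.gcd p q = 1 ->
  j mod k = a mod k -> a < k * q ->
  exists i, i < q /\ (j + i * (k * p)) mod (k * q) = a.
Proof.
  intros Hk Hp Hq Hg Hr Ha.
  destruct (Nat.gcd_bezout_pos p q Hp) as [u [v Huv]]. rewrite Hg in Huv.
  set (j1 := j / k). set (a1 := a / k). set (r := a mod k).
  assert (Ej : j = k * j1 + r) by (unfold j1, r; rewrite <- Hr; apply Nat.div_mod_eq).
  assert (Ea : a = k * a1 + r) by (unfold a1, r; apply Nat.div_mod_eq).
  assert (Hrk : r < k) by (apply Nat.mod_upper_bound; lia).
  assert (Ha1 : a1 < q) by (unfold a1; apply Nat.Div0.div_lt_upper_bound; lia).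
  set (c := a1 + (q - 1) * j1).
  exists ((c * u) mod q). split; [apply Nat.mod_upper_bound; lia|].
  replace (j + (c * u) mod q * (k * p)) with (k * (j1 + (c * u) mod q * p) + r) by (rewrite Ej; lia).
  rewrite Nat.Div0.add_mul_mod_distr_l by lia. rewrite Ea. f_equal. f_equal.
  rewrite Nat.Div0.add_mod, Nat.Div0.mul_mod_idemp_l, <- Nat.Div0.add_mod.
  replace (j1 + c * u * p) with (a1 + (j1 + c * v) * q) by (unfold c; nia).
  rewrite Nat.Div0.mod_add. apply Nat.mod_small; auto.
Qed.

Lemma orbit_inj k q p j i i' : 0 < k -> 0 < q -> Nat.gcd p q = 1 -> i < q -> i' < q ->
  (j + i * (k * p)) mod (k * q) = (j + i' * (k * p)) mod (k * q) -> i = i'.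
Proof.
  intros Hk Hq Hg Hi Hi' E.
  assert (forall i i', i <= i' -> i' < q -> (j + i * (k * p)) mod (k * q) = (j + i' * (k * p)) mod (k * q) -> i = i') as W.
  { clear i i' Hi Hi' E. intros i i' Hle Hi' E.
    set (x := j + i * (k * p)) in *. set (y := j + i' * (k * p)) in *.
    assert (Ex := Nat.div_mod_eq x (k * q)). assert (Ey := Nat.div_mod_eq y (k * q)).
    assert (Hxy : y = x + (i' - i) * (k * p)) by (unfold x, y; replace i' with (i + (i' - i)) at 1 by lia; ring).
    set (Qx := x / (k * q)) in *. set (Qy := y / (k * q)) in *.
    assert (H1 : (i' - i) * (k * p) = k * q * (Qy - Qx)).
    { rewrite Nat.mul_sub_distr_l. rewrite E in Ex. set (w := (i' - i) * (k * p)) in *.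
      set (A := k * q * Qx) in *. set (B := k * q * Qy) in *. lia. }
    assert (H2 : (i' - i) * p = q * (Qy - Qx)).
    { apply (Nat.mul_cancel_l _ _ k); [lia|]. rewrite Nat.mul_assoc, (Nat.mul_comm k (i' - i)), <- Nat.mul_assoc, H1. ring. }
    assert (Hd : Nat.divide q (p * (i' - i))).
    { exists (Qy - Qx). lia. }
    apply Nat.gauss in Hd; [|rewrite Nat.gcd_comm; auto].
    destruct Hd as [z Hz]. destruct z; lia. }
  destruct (Nat.le_ge_cases i i'); [apply W; auto|symmetry; apply W; auto].
Qed.

Lemma mod_pred_step y P n : y < n -> 0 < P < n -> (y + P) mod n = n - 1 -> y = n - 1 - P.
Proof.
  intros Hy HP E. destruct (Nat.lt_ge_cases (y + P) n).
  - rewrite Nat.mod_small in E; lia.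
  - replace (y + P) with ((y + P - n) + 1 * n) in E by lia. rewrite Nat.Div0.mod_add, Nat.mod_small in E; lia.
Qed.

Definition Mw (d k q p : nat) (dl : nat -> nat) (j : nat) : nat :=
  val d (fun i => dl ((j + i * (k * p)) mod (k * q))) q.

Definition Valid (d k q p : nat) (dl : nat -> nat) : Prop :=
  (forall j, S j < k * q -> dl j <= dl (S j)) /\
  dl (k * q - 1) <= d - 1 /\
  dl (k * q - 1 - k * p) < dl (k * q - k * p) /\
  (forall r, r < k - 1 -> exists a, a < k * q - 1 /\ a mod k = r /\ dl a < dl (S a)).

Definition Hyp (d k q p : nat) : Prop :=
  2 <= d /\ 1 <= k /\ 2 <= q /\ 1 <= p <= q - 1 /\ Nat.gcd p q = 1.

Lemma valid_mono d k q p dl : Valid d k q p dl -> forall i j, i <= j -> j < k * q -> dl i <= dl j.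
Proof.
  intros [H _] i j Hij Hj. induction j.
  - replace i with 0 by lia. lia.
  - destruct (Nat.eq_dec i (S j)); [subst; lia|].
    specialize (H j Hj). specialize (IHj ltac:(lia) ltac:(lia)). lia.
Qed.

Lemma valid_bound d k q p dl : Hyp d k q p -> Valid d k q p dl -> forall j, j < k * q -> dl j <= d - 1.
Proof.
  intros Hh Hv j Hj. assert (H := valid_mono _ _ _ _ _ Hv j (k * q - 1) ltac:(lia) ltac:(destruct Hh; nia)).
  destruct Hv as [_ [H2 _]]. lia.
Qed.

Lemma nm1_mod d k q p : Hyp d k q p -> (k * q - 1) mod k = k - 1.
Proof.
  intros (Hd & Hk & Hq & Hp & Hg).
  replace (k * q - 1) with ((k - 1) + (q - 1) * k) by nia.
  rewrite Nat.Div0.mod_add. apply Nat.mod_small. lia.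
Qed.

Lemma nm1P_mod d k q p : Hyp d k q p -> (k * q - 1 - k * p) mod k = k - 1.
Proof.
  intros (Hd & Hk & Hq & Hp & Hg).
  replace (k * q - 1 - k * p) with ((k - 1) + (q - 1 - p) * k) by nia.
  rewrite Nat.Div0.mod_add. apply Nat.mod_small. lia.
Qed.

Lemma class_small d k q p dl : Hyp d k q p -> Valid d k q p dl ->
  forall c, c < k -> exists y, y < k * q /\ y mod k = c /\ dl y <= d - 2.
Proof.
  intros Hh Hv c Hc. assert (Hh' := Hh). destruct Hh' as (Hd & Hk & Hq & Hp & Hg).
  destruct (Nat.eq_dec c (k - 1)).
  - exists (k * q - 1 - k * p). split; [nia|]. split; [rewrite (nm1P_mod d k q p Hh); lia|].
    assert (dl (k * q - k * p) <= d - 1) by (apply (valid_bound d k q p); auto; nia).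
    destruct Hv as [H1 [H2 [H3 H4]]]. lia.
  - assert (Hv' := Hv). destruct Hv' as [H1 [H2 [H3 H4]]]. destruct (H4 c ltac:(lia)) as [a [Ha [Hac Hj]]].
    exists a. split; [lia|]. split; auto.
    assert (dl (S a) <= d - 1) by (apply (valid_bound d k q p); auto; lia). lia.
Qed.

Lemma Mw_bound d k q p dl : Hyp d k q p -> Valid d k q p dl -> forall j, j < k * q ->
  Mw d k q p dl j + 2 <= d ^ q.
Proof.
  intros Hh Hv j Hj. assert (Hh' := Hh). destruct Hh' as (Hd & Hk & Hq & Hp & Hg).
  apply val_bound2; auto.
  - intros i _. apply (valid_bound d k q p); auto. apply Nat.mod_upper_bound. nia.
  - destruct (class_small d k q p dl Hh Hv (j mod k)) as [y [Hy [Hyc Hyd]]]; [apply Nat.mod_upper_bound; lia|].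
    destruct (orbit_solve k q p j y) as [i [Hi Ei]]; try lia.
    exists i. split; auto. rewrite Ei. auto.
Qed.

Lemma Mw_strict d k q p dl : Hyp d k q p -> Valid d k q p dl -> forall j, S j < k * q ->
  Mw d k q p dl j < Mw d k q p dl (S j).
Proof.
  intros Hh Hv j Hj. assert (Hh' := Hh). destruct Hh' as (Hd & Hk & Hq & Hp & Hg).
  set (n := k * q) in *. set (P := k * p).
  assert (Hn : 0 < n) by lia.
  assert (Key : exists m, m <= q /\ (forall i, i < m -> (j + i * P) mod n <> n - 1) /\
     exists i, i < m /\ S ((j + i * P) mod n) < n /\ dl ((j + i * P) mod n) < dl (S ((j + i * P) mod n))).
  { destruct (Nat.eq_dec (j mod k) (k - 1)) as [Ec|Ec].
    - destruct (orbit_solve k q p j (n - 1)) as [is [His Eis]]; try lia.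
      { unfold n. rewrite (nm1_mod d k q p Hh). auto. }
      destruct is as [|i0].
      + rewrite Nat.mul_0_l, Nat.add_0_r, Nat.mod_small in Eis; lia.
      + exists (S i0). split; [lia|]. split.
        * intros i Hi E. assert (i = S i0) by (apply (orbit_inj k q p j); try lia; unfold P, n in *; rewrite E, Eis; auto). lia.
        * exists i0. split; [lia|].
          assert (Hx : (j + i0 * P) mod n = n - 1 - P).
          { apply mod_pred_step; [apply Nat.mod_upper_bound; lia|unfold P; nia|].
            rewrite mod_add_idem. replace (j + i0 * P + P) with (j + S i0 * P) by lia. auto. }
          rewrite Hx. destruct Hv as [_ [_ [H3 _]]]. unfold n, P in *. split; [nia|].
          replace (S (k * q - 1 - k * p)) with (k * q - k * p) by nia. auto.
    - destruct Hv as [_ [_ [_ H4]]].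
      assert (Hr : j mod k < k - 1) by (assert (j mod k < k) by (apply Nat.mod_upper_bound; lia); lia).
      destruct (H4 _ Hr) as [a [Ha [Hac Hja]]].
      destruct (orbit_solve k q p j a) as [i [Hi Ei]]; try lia.
      exists q. split; auto. split.
      + intros i' _ E. apply (f_equal (fun x => x mod k)) in E. unfold P, n in E.
        rewrite modk_orbit in E by lia. rewrite (nm1_mod d k q p Hh) in E. lia.
      + exists i. unfold P, n. rewrite Ei. split; auto. split; [lia|auto]. }
  destruct Key as [m [Hm [Hne [i0 [Hi0 [Hi0n Hjump]]]]]].
  unfold Mw. apply (val_lex d _ _ q m); try lia.
  - intros i _. split; apply (valid_bound d k q p); auto; apply Nat.mod_upper_bound; lia.
  - intros i Hi. fold n P. replace (S j + i * P) with (j + i * P + 1) by lia.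
    rewrite mod_succ by (auto; apply Hne; auto). rewrite Nat.add_1_r.
    apply (valid_mono d k q p dl Hv); [lia|]. specialize (Hne i Hi).
    assert ((j + i * P) mod n < n) by (apply Nat.mod_upper_bound; lia). lia.
  - exists i0. split; auto. fold n P. replace (S j + i0 * P) with (j + i0 * P + 1) by lia.
    rewrite mod_succ by (auto; apply Hne; auto). rewrite Nat.add_1_r. auto.
Qed.

Lemma Mw_shift d k q p dl : Hyp d k q p -> forall j, j < k * q ->
  d * Mw d k q p dl j + dl j = Mw d k q p dl ((j + k * p) mod (k * q)) + dl j * d ^ q.
Proof.
  intros Hh j Hj. assert (Hh' := Hh). destruct Hh' as (Hd & Hk & Hq & Hp & Hg).
  unfold Mw. destruct q as [|q']; [lia|].
  assert (E0 : (j + 0 * (k * p)) mod (k * S q') = j) by (rewrite Nat.mul_0_l, Nat.add_0_r; apply Nat.mod_small; auto).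
  assert (HS := val_shift d (fun i : nat => dl ((j + i * (k * p)) mod (k * S q'))) q' ltac:(lia)).
  cbv beta in HS. rewrite E0 in HS. rewrite HS.
  2:{ f_equal. rewrite mod_period. apply Nat.mod_small; auto. }
  f_equal. apply val_ext. intros i _. f_equal.
  rewrite mod_add_idem. f_equal. lia.
Qed.

End Part0.

Section Part6.

Definition Ulist (d k q p : nat) (dl : nat -> nat) : list R :=
  map (fun j => INR (Mw d k q p dl j) / INR (d ^ q - 1)) (seq 0 (k * q)).

Lemma Ulist_length d k q p dl : length (Ulist d k q p dl) = (k * q)%nat.
Proof. unfold Ulist. rewrite length_map, length_seq. reflexivity. Qed.

Lemma Ulist_nth d k q p dl j : (j < k * q)%nat ->
  nth j (Ulist d k q p dl) 0 = INR (Mw d k q p dl j) / INR (d ^ q - 1).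
Proof.
  intros Hj. unfold Ulist.
  rewrite (nth_indep _ _ ((fun j => INR (Mw d k q p dl j) / INR (d ^ q - 1)) 0%nat)) by (rewrite length_map, length_seq; auto).
  rewrite (map_nth (fun j0 => INR (Mw d k q p dl j0) / INR (d ^ q - 1)) (seq 0 (k*q)) 0%nat j).
  rewrite seq_nth; auto.
Qed.

Lemma Ulist_ext d k q p dl dl' : (0 < k * q)%nat -> (forall j, (j < k * q)%nat -> dl j = dl' j) ->
  Ulist d k q p dl = Ulist d k q p dl'.
Proof.
  intros Hn H. unfold Ulist. apply map_ext_in. intros j _. unfold Mw.
  rewrite (val_ext d _ (fun i => dl' ((j + i * (k * p)) mod (k * q)))); auto.
  intros i _. apply H. apply Nat.mod_upper_bound. lia.
Qed.

Lemma Epos d q : (2 <= d)%nat -> (1 <= q)%nat -> 0 < INR (d ^ q - 1).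
Proof.
  intros Hd Hq. apply lt_0_INR. assert (d ^ 1 <= d ^ q)%nat by (apply Nat.pow_le_mono_r; lia).
  simpl in H. lia.
Qed.

Lemma sigma_Ulist d k q p dl : Hyp d k q p -> forall j, (j < k * q)%nat ->
  INR d * (INR (Mw d k q p dl j) / INR (d ^ q - 1)) =
  INR (dl j) + INR (Mw d k q p dl ((j + k * p) mod (k * q))) / INR (d ^ q - 1).
Proof.
  intros Hh j Hj. assert (Hh' := Hh). destruct Hh' as (Hd & Hk & Hq & Hp & Hg).
  assert (HE := Epos d q ltac:(lia) ltac:(lia)).
  assert (Hs := Mw_shift d k q p dl Hh j Hj).
  assert (Hpow : (1 <= d ^ q)%nat) by (apply Nat.neq_0_lt_0, Nat.pow_nonzero; lia).
  assert (Hn : (d * Mw d k q p dl j = Mw d k q p dl ((j + k * p) mod (k * q)) + dl j * (d ^ q - 1))%nat).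
  { rewrite Nat.mul_sub_distr_l. nia. }
  apply (f_equal INR) in Hn. rewrite mult_INR, plus_INR, mult_INR in Hn.
  field_simplify_eq; [|lra]. rewrite Hn. ring.
Qed.

Lemma frac_nat_plus (m : nat) (x : R) : 0 <= x < 1 -> frac_part (INR m + x) = x.
Proof.
  intros H. symmetry. apply (Int_part_frac_part_spec (INR m + x) (Z.of_nat m) x H).
  rewrite <- INR_IZR_INZ. reflexivity.
Qed.

Lemma valid_rot d k q p dl : Hyp d k q p -> Valid d k q p dl -> rot_set_k d p q k (Ulist d k q p dl).
Proof.
  intros Hh Hv. assert (Hh' := Hh). destruct Hh' as (Hd & Hk & Hq & Hp & Hg).
  assert (HE := Epos d q ltac:(lia) ltac:(lia)).
  assert (Hpow : (1 <= d ^ q)%nat) by (apply Nat.neq_0_lt_0, Nat.pow_nonzero; lia).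
  assert (Hrange : forall j, (j < k * q)%nat -> 0 <= INR (Mw d k q p dl j) / INR (d ^ q - 1) < 1).
  { intros j Hj. assert (HB := Mw_bound d k q p dl Hh Hv j Hj). split.
    - unfold Rdiv; apply Rmult_le_pos; [apply pos_INR|left; apply Rinv_0_lt_compat; auto].
    - apply (Rmult_lt_reg_r (INR (d ^ q - 1))); auto. unfold Rdiv. rewrite Rmult_assoc, Rinv_l by lra.
      rewrite Rmult_1_r, Rmult_1_l. apply lt_INR. lia. }
  unfold rot_set_k. rewrite Ulist_length. split; [auto|]. split; [|split].
  - intros j Hj. rewrite Ulist_nth; auto.
  - intros i j Hij Hj. rewrite !Ulist_nth by lia.
    assert (Mw d k q p dl i < Mw d k q p dl j)%nat.
    { induction j; [lia|]. destruct (Nat.eq_dec i j).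
      - subst. apply Mw_strict; auto.
      - assert (Mw d k q p dl j < Mw d k q p dl (S j))%nat by (apply Mw_strict; auto). 
        specialize (IHj ltac:(lia) ltac:(lia)). lia. }
    unfold Rdiv. apply Rmult_lt_compat_r; [apply Rinv_0_lt_compat; auto|]. apply lt_INR; auto.
  - intros j Hj. unfold Defs.sigma. rewrite !Ulist_nth; auto.
    2:{ apply Nat.mod_upper_bound; lia. }
    rewrite sigma_Ulist by auto. apply frac_nat_plus. apply Hrange. apply Nat.mod_upper_bound; lia.
Qed.

Lemma Ulist_inj d k q p dl dl' : Hyp d k q p -> Ulist d k q p dl = Ulist d k q p dl' ->
  forall j, (j < k * q)%nat -> dl j = dl' j.
Proof.
  intros Hh E j Hj. assert (Hh' := Hh). destruct Hh' as (Hd & Hk & Hq & Hp & Hg).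
  assert (Hj' : ((j + k * p) mod (k * q) < k * q)%nat) by (apply Nat.mod_upper_bound; lia).
  assert (E1 := f_equal (fun l => nth j l 0) E). assert (E2 := f_equal (fun l => nth ((j + k * p) mod (k * q)) l 0) E).
  cbv beta in E1, E2.
  rewrite !Ulist_nth in E1, E2 by auto.
  assert (H1 := sigma_Ulist d k q p dl Hh j Hj). assert (H2 := sigma_Ulist d k q p dl' Hh j Hj).
  rewrite E1, E2 in H1. rewrite H1 in H2. apply INR_eq. lra.
Qed.

End Part6.

From Stdlib Require Import ZArith.

Section Part7.

Lemma Int_part_mono x y : x <= y -> (Int_part x <= Int_part y)%Z.
Proof.
  intros H. destruct (base_Int_part x) as [Hx1 Hx2]. destruct (base_Int_part y) as [Hy1 Hy2].
  assert (IZR (Int_part x) < IZR (Int_part y + 1)) by (rewrite plus_IZR; lra).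
  apply lt_IZR in H0. lia.
Qed.

Definition delta_of (d : nat) (u : list R) (j : nat) : nat := Z.to_nat (Int_part (INR d * nth j u 0)).

Lemma delta_props d u j : (1 <= d)%nat -> 0 <= nth j u 0 < 1 ->
  INR (delta_of d u j) = IZR (Int_part (INR d * nth j u 0)) /\ (delta_of d u j <= d - 1)%nat.
Proof.
  intros Hd [H0 H1]. unfold delta_of. set (x := INR d * nth j u 0).
  assert (Hx0 : 0 <= x) by (unfold x; apply Rmult_le_pos; [apply pos_INR|auto]).
  assert (Hxd : x < INR d) by (unfold x; assert (0 < INR d) by (apply lt_0_INR; lia); nra).
  destruct (base_Int_part x) as [B1 B2].
  assert (Hge : (0 <= Int_part x)%Z) by (assert (IZR (-1) < IZR (Int_part x)) by lra; apply lt_IZR in H; lia).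
  assert (Hlt : (Int_part x < Z.of_nat d)%Z) by (apply lt_IZR; rewrite <- INR_IZR_INZ; lra).
  split.
  - rewrite INR_IZR_INZ, Z2Nat.id; auto.
  - lia.
Qed.


Lemma nec d k q p u : Hyp d k q p -> rot_set_k d p q k u ->
  exists dl, Valid d k q p dl /\ u = Ulist d k q p dl.
Proof.
  intros Hh [Hlen [Hr [Hinc Hsig]]]. assert (Hh' := Hh). destruct Hh' as (Hd & Hk & Hq & Hp & Hg).
  rewrite Hlen in Hr, Hinc, Hsig.
  set (n := (k * q)%nat) in *. set (P := (k * p)%nat) in *.
  assert (Hn : (2 <= n)%nat) by (unfold n; nia).
  set (dl := delta_of d u).
  assert (HD : forall j, (j < n)%nat -> INR (dl j) = IZR (Int_part (INR d * nth j u 0)) /\ (dl j <= d - 1)%nat).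
  { intros j Hj. apply delta_props; auto; lia. }
  assert (Hstep : forall j, (j < n)%nat -> INR d * nth j u 0 = INR (dl j) + nth ((j + P) mod n) u 0).
  { intros j Hj. rewrite (proj1 (HD j Hj)). rewrite <- (Hsig j Hj). unfold Defs.sigma. apply Rplus_Int_part_frac_part. }
  assert (Hiter : forall j, (j < n)%nat -> forall i,
     INR (d ^ i) * nth j u 0 = INR (val d (fun i => dl ((j + i * P) mod n)) i) + nth ((j + i * P) mod n) u 0).
  { intros j Hj i. induction i.
    - simpl. rewrite Nat.add_0_r, Nat.mod_small by auto. lra.
    - rewrite Nat.pow_succ_r', mult_INR. simpl val. rewrite plus_INR, mult_INR.
      rewrite Rmult_assoc, IHi, Rmult_plus_distr_l.
      assert (Hx : ((j + i * P) mod n < n)%nat) by (apply Nat.mod_upper_bound; lia).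
      rewrite Hstep by auto. rewrite mod_add_idem. replace (j + i * P + P)%nat with (j + S i * P)%nat by lia. ring. }
  assert (HE := Epos d q ltac:(lia) ltac:(lia)).
  assert (Hpow : (1 <= d ^ q)%nat) by (apply Nat.neq_0_lt_0, Nat.pow_nonzero; lia).
  assert (Hval : forall j, (j < n)%nat -> nth j u 0 = INR (Mw d k q p dl j) / INR (d ^ q - 1)).
  { intros j Hj. assert (H := Hiter j Hj q). unfold P, n in H. rewrite mod_period, Nat.mod_small in H by auto.
    unfold Mw. fold n P. rewrite minus_INR by auto. simpl INR at 2. field_simplify_eq; [|rewrite <- minus_INR by auto; simpl; lra].
    fold n P in H. replace (INR 1) with 1 by reflexivity. lra. }
  assert (HM : forall i j, (i < j)%nat -> (j < n)%nat -> (Mw d k q p dl i < Mw d k q p dl j)%nat).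
  { intros i j Hij Hj. assert (H := Hinc i j Hij Hj). rewrite !Hval in H by lia.
    apply INR_lt. unfold Rdiv in H. apply Rmult_lt_reg_r in H; auto. apply Rinv_0_lt_compat; auto. }
  assert (Hmono : forall j, (S j < n)%nat -> (dl j <= dl (S j))%nat).
  { intros j Hj. unfold dl, delta_of. apply Z2Nat.inj_le.
    - destruct (base_Int_part (INR d * nth j u 0)). destruct (Hr j ltac:(lia)).
      assert (0 <= INR d * nth j u 0) by (apply Rmult_le_pos; [apply pos_INR|auto]).
      assert (HZ : IZR (-1) < IZR (Int_part (INR d * nth j u 0))) by lra. apply lt_IZR in HZ. lia.
    - destruct (base_Int_part (INR d * nth (S j) u 0)). destruct (Hr (S j) ltac:(lia)).
      assert (0 <= INR d * nth (S j) u 0) by (apply Rmult_le_pos; [apply pos_INR|auto]).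
      assert (HZ : IZR (-1) < IZR (Int_part (INR d * nth (S j) u 0))) by lra. apply lt_IZR in HZ. lia.
    - apply Int_part_mono. apply Rmult_le_compat_l; [apply pos_INR|]. left. apply Hinc; lia. }
  assert (Hdig : forall j i, (j < n)%nat -> (dl ((j + i * P) mod n) <= d - 1)%nat).
  { intros j i Hj. apply HD. apply Nat.mod_upper_bound. lia. }
  Local Open Scope nat_scope.
  exists dl. split.
  - unfold Valid. fold n P. split; [auto|]. split; [apply HD; lia|]. split.
    +
      destruct (Nat.lt_ge_cases (dl (n - 1 - P)) (dl (n - P))) as [Hlt|Hge]; auto. exfalso.
      assert (Hpos : (1 <= P < n)%nat) by (unfold P, n; nia).
      assert (Heq : dl (n - 1 - P) = dl (n - P)).
      { replace (n - P)%nat with (S (n - 1 - P)) in * by lia. assert (H := Hmono (n - 1 - P)%nat ltac:(lia)). lia. }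
      assert (Hlast : (dl 0 <= dl (n - 1))%nat).
      { clear -Hmono Hn. assert (forall m, (m < n)%nat -> (dl 0 <= dl m)%nat).
        { induction m; intros Hm; auto. specialize (Hmono m Hm). specialize (IHm ltac:(lia)). lia. }
        apply H; lia. }
      assert (HMs := HM (n - 1 - P)%nat (n - P)%nat ltac:(lia) ltac:(lia)).
      destruct (Nat.eq_dec (dl 0) (dl (n - 1))) as [E0|E0].
      *
        assert (Hc : forall m, (m < n)%nat -> dl m = dl 0).
        { intros m Hm. assert (forall m, (m < n)%nat -> (dl 0 <= dl m)%nat /\ (dl m <= dl (n - 1))%nat) as HH.
          { intros m0 Hm0. split.
            - clear -Hmono Hm0. induction m0; auto. specialize (Hmono m0 Hm0). specialize (IHm0 ltac:(lia)). lia.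
            - clear -Hmono Hm0 Hn. remember (n - 1 - m0)%nat as t. revert m0 Hm0 Heqt. induction t; intros m0 Hm0 Et.
              + replace m0 with (n - 1)%nat by lia. lia.
              + specialize (IHt (S m0) ltac:(lia) ltac:(lia)). specialize (Hmono m0 ltac:(lia)). lia. }
          specialize (HH m Hm). lia. }
        assert (HM01 := HM 0%nat 1%nat ltac:(lia) ltac:(lia)).
        unfold Mw in HM01. fold n P in HM01.
        rewrite (val_ext d (fun i => dl ((0 + i * P) mod n)) (fun i => dl 1%nat)) in HM01.
        2:{ intros i _. rewrite Hc, (Hc 1%nat) by (try apply Nat.mod_upper_bound; lia). auto. }
        rewrite (val_ext d (fun i => dl ((1 + i * P) mod n)) (fun i => dl 1%nat)) in HM01.
        2:{ intros i _. rewrite Hc, (Hc 1%nat) by (try apply Nat.mod_upper_bound; lia). auto. }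
        lia.
      * assert (Mw d k q p dl (n - P) < Mw d k q p dl (n - 1 - P))%nat.
        { unfold Mw. fold n P. apply (val_lex d _ _ q 2); try lia.
          - intros i _. split; apply Hdig; lia.
          - intros i Hi. destruct i as [|[|i]]; try lia.
            + rewrite !Nat.mul_0_l, !Nat.add_0_r, !Nat.mod_small by lia. lia.
            + rewrite !Nat.mul_1_l. replace (n - P + P)%nat with (0 + 1 * n)%nat by lia.
              replace (n - 1 - P + P)%nat with (n - 1 + 0 * n)%nat by lia. rewrite !Nat.Div0.mod_add, !Nat.mod_small by lia. lia.
          - exists 1%nat. split; [lia|]. rewrite !Nat.mul_1_l. replace (n - P + P)%nat with (0 + 1 * n)%nat by lia.
            replace (n - 1 - P + P)%nat with (n - 1 + 0 * n)%nat by lia. rewrite !Nat.Div0.mod_add, !Nat.mod_small by lia. lia. }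
        lia.
    + intros r Hrk. apply NNPP. intros Hno.
      assert (Hno' : forall a, (a < n - 1)%nat -> a mod k = r -> dl a = dl (S a)).
      { intros a Ha Har. destruct (Nat.lt_ge_cases (dl a) (dl (S a))).
        - exfalso. apply Hno. exists a. auto.
        - specialize (Hmono a ltac:(lia)). lia. }
      assert (HMr := HM r (S r) ltac:(lia) ltac:(unfold n; nia)).
      unfold Mw in HMr. fold n P in HMr.
      rewrite (val_ext d (fun i => dl ((S r + i * P) mod n)) (fun i => dl ((r + i * P) mod n))) in HMr. lia.
      intros i _.
      assert (Hcl : ((r + i * P) mod n) mod k = r).
      { unfold n, P. rewrite modk_orbit by lia. apply Nat.mod_small. lia. }
      assert (Hne : (r + i * P) mod n <> (n - 1)%nat).
      { intros E. rewrite E in Hcl. unfold n in Hcl. rewrite (nm1_mod d k q p Hh) in Hcl. lia. }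
      replace (S r + i * P)%nat with (r + i * P + 1)%nat by lia. rewrite mod_succ by (auto; lia).
      assert ((r + i * P) mod n < n)%nat by (apply Nat.mod_upper_bound; lia).
      rewrite Nat.add_1_r. symmetry. apply Hno'; auto. lia.
  - apply nth_ext with (d := 0%R) (d' := 0%R).
    + rewrite Ulist_length; auto.
    + intros j Hj. rewrite Hlen in Hj. rewrite Ulist_nth by auto. apply Hval; auto.
Qed.

End Part7.

Section Part8.
Local Open Scope nat_scope.

Definition xj (k q p : nat) (gs : list (list nat)) (f : list nat) (a : nat) : nat :=
  if a mod k <? k - 1 then nth (a / k) (nth (a mod k) gs nil) 0
  else nth (S (a / k)) f 0 + (if a / k =? q - p - 1 then 1 else 0).

Definition Phi (k q p : nat) (x : list (list nat) * list nat) (j : nat) : nat :=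
  nth 0 (snd x) 0 + sumn (xj k q p (fst x) (snd x)) j.

Definition builder (d k q p : nat) (dl : nat -> nat) : list (list nat) * list nat :=
  (map (fun r => map (fun b => dl (S (b * k + r)) - dl (b * k + r)) (seq 0 q)) (seq 0 (k - 1)),
   dl 0 :: (map (fun b => dl (S (b * k + (k - 1))) - dl (b * k + (k - 1)) - (if b =? q - p - 1 then 1 else 0)) (seq 0 (q - 1))
            ++ (d - 1 - dl (k * q - 1)) :: nil)).

Lemma divmod_bk b k r : r < k -> (b * k + r) / k = b /\ (b * k + r) mod k = r.
Proof.
  intros H. split.
  - rewrite Nat.div_add_l by lia. rewrite Nat.div_small by auto. lia.
  - rewrite Nat.add_comm, Nat.Div0.mod_add. apply Nat.mod_small; auto.
Qed.

Lemma sumn_ind q c : c < q -> sumn (fun b => if b =? c then 1 else 0) q = 1.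
Proof.
  induction q; intros H; [lia|]. simpl. destruct (Nat.eqb_spec q c).
  - subst c. rewrite sumn_zero; auto. intros i Hi. destruct (Nat.eqb_spec i q); lia.
  - rewrite IHq; lia.
Qed.

Lemma nth_map_seq {A} (F : nat -> A) n i dflt : i < n -> nth i (map F (seq 0 n)) dflt = F i.
Proof.
  intros H. rewrite (nth_indep _ _ (F 0)) by (rewrite length_map, length_seq; auto).
  rewrite map_nth, seq_nth; auto.
Qed.

Lemma sumn_last f n : 1 <= n -> sumn f n = sumn f (n - 1) + f (n - 1).
Proof. destruct n; intros H; [lia|]. simpl. rewrite Nat.sub_0_r. reflexivity. Qed.

Lemma regroup k q p gs f : 1 <= k -> 1 <= p -> p < q -> length gs = k - 1 ->
  (forall g, In g gs -> length g = q) -> length f = S q ->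
  nth 0 f 0 + sumn (xj k q p gs f) (k * q) = 1 + list_sum (map list_sum gs) + list_sum f.
Proof.
  intros Hk Hp Hpq Hgs Hg Hf.
  rewrite Nat.mul_comm, sumn_block, sumn_swap.
  rewrite (sumn_last _ k) by lia. cbv beta.
  rewrite (sumn_ext (fun i => xj k q p gs f (i * k + (k - 1))) (fun b => nth (S b) f 0 + (if b =? q - p - 1 then 1 else 0))).
  2:{ intros b _. unfold xj. destruct (divmod_bk b k (k - 1) ltac:(lia)) as [E1 E2]. rewrite E1, E2.
      rewrite Nat.ltb_irrefl. reflexivity. }
  rewrite sumn_add, sumn_ind by lia.
  rewrite (sumn_ext (fun j => sumn (fun i => xj k q p gs f (i * k + j)) q) (fun r => list_sum (nth r gs nil))).
  2:{ intros r Hr. rewrite list_sum_nth. rewrite Hg by (apply nth_In; lia).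
      apply sumn_ext. intros b _. unfold xj. destruct (divmod_bk b k r ltac:(lia)) as [E1 E2]. rewrite E1, E2.
      replace (r <? k - 1) with true by (symmetry; apply Nat.ltb_lt; lia). reflexivity. }
  rewrite (list_sum_nth (map list_sum gs)), length_map, Hgs.
  rewrite (sumn_ext (fun r => list_sum (nth r gs nil)) (fun i => nth i (map list_sum gs) 0)).
  2:{ intros i Hi. rewrite (nth_indep _ _ (list_sum nil)) by (rewrite length_map; lia). rewrite map_nth. reflexivity. }
  rewrite (list_sum_nth f), Hf, sumn_shift. lia.
Qed.

Lemma Phi_valid d k q p x : Hyp d k q p -> Gpred q (k - 1) (d - 2) x -> Valid d k q p (Phi k q p x).
Proof.
  intros Hh [H1 [H2 [H3 H4]]]. assert (Hh' := Hh). destruct Hh' as (Hd & Hk & Hq & Hp & Hg).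
  destruct x as [gs f]. simpl in *.
  assert (HR := regroup k q p gs f ltac:(lia) ltac:(lia) ltac:(lia) H1 (fun g Hg => proj1 (H2 g Hg)) H3).
  unfold Valid, Phi; simpl. split; [|split; [|split]].
  - intros j _. simpl. lia.
  - replace (k * q) with (S (k * q - 1)) in HR by nia. simpl in HR. lia.
  - replace (k * q - k * p) with (S (k * q - 1 - k * p)) by nia. simpl.
    assert (1 <= xj k q p gs f (k * q - 1 - k * p)).
    { unfold xj. rewrite (nm1P_mod d k q p Hh), Nat.ltb_irrefl.
      replace (k * q - 1 - k * p) with ((q - p - 1) * k + (k - 1)) by nia.
      destruct (divmod_bk (q - p - 1) k (k - 1) ltac:(lia)) as [E1 _]. rewrite E1, Nat.eqb_refl. lia. }
    lia.
  - intros r Hr. assert (Hin : In (nth r gs nil) gs) by (apply nth_In; lia).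
    destruct (H2 _ Hin) as [Hl Hs]. rewrite list_sum_nth, Hl in Hs.
    destruct (sumn_pos _ _ Hs) as [b [Hb Hpos]].
    exists (b * k + r). destruct (divmod_bk b k r ltac:(lia)) as [E1 E2].
    split; [nia|]. split; auto. simpl. unfold xj. rewrite E1, E2.
    replace (r <? k - 1) with true by (symmetry; apply Nat.ltb_lt; lia). lia.
Qed.



Lemma telescope dl m : (forall j, S j <= m -> dl j <= dl (S j)) ->
  dl 0 + sumn (fun a => dl (S a) - dl a) m = dl m.
Proof.
  induction m; intros H; simpl; auto.
  assert (IH := IHm (fun j Hj => H j ltac:(lia))). specialize (H m ltac:(lia)). lia.
Qed.

Lemma xj_builder d k q p dl : Hyp d k q p -> Valid d k q p dl -> forall a, a < k * q - 1 ->
  xj k q p (fst (builder d k q p dl)) (snd (builder d k q p dl)) a = dl (S a) - dl a.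
Proof.
  intros Hh Hv a Ha. assert (Hh' := Hh). destruct Hh' as (Hd & Hk & Hq & Hp & Hg).
  unfold xj, builder; simpl.
  set (b := a / k). set (r := a mod k).
  assert (Hr : r < k) by (apply Nat.mod_upper_bound; lia).
  assert (Ea : a = b * k + r) by (unfold b, r; rewrite Nat.mul_comm; apply Nat.div_mod_eq).
  assert (Hb : b < q) by nia.
  destruct (Nat.ltb_spec r (k - 1)).
  - rewrite nth_map_seq by auto. rewrite nth_map_seq by auto. rewrite <- Ea. reflexivity.
  - assert (Er : r = k - 1) by lia. assert (Hb' : b < q - 1) by nia.
    rewrite app_nth1 by (rewrite length_map, length_seq; auto).
    rewrite nth_map_seq by auto. rewrite <- Er, <- Ea.
    destruct (Nat.eqb_spec b (q - p - 1)); [|lia].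
    assert (Hax : a = k * q - 1 - k * p) by nia. rewrite Hax.
    destruct Hv as [_ [_ [H3 _]]]. replace (S (k * q - 1 - k * p)) with (k * q - k * p) by nia. lia.
Qed.

Lemma builder_Phi d k q p dl : Hyp d k q p -> Valid d k q p dl -> forall j, j < k * q ->
  Phi k q p (builder d k q p dl) j = dl j.
Proof.
  intros Hh Hv j Hj. unfold Phi.
  replace (nth 0 (snd (builder d k q p dl)) 0) with (dl 0) by reflexivity.
  rewrite (sumn_ext _ (fun a => dl (S a) - dl a)).
  - apply telescope. intros i Hi. destruct Hv as [Hm _]. apply Hm. lia.
  - intros a Ha. apply xj_builder; auto. lia.
Qed.

Lemma builder_in d k q p dl : Hyp d k q p -> Valid d k q p dl -> Gpred q (k - 1) (d - 2) (builder d k q p dl).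
Proof.
  intros Hh Hv. assert (Hh' := Hh). destruct Hh' as (Hd & Hk & Hq & Hp & Hg).
  assert (Hlf : length (snd (builder d k q p dl)) = S q).
  { simpl. rewrite length_app, length_map, length_seq. simpl. lia. }
  assert (Hlg : length (fst (builder d k q p dl)) = k - 1).
  { simpl. rewrite length_map, length_seq. auto. }
  assert (Hgq : forall g, In g (fst (builder d k q p dl)) -> length g = q).
  { simpl. intros g Hg'. apply in_map_iff in Hg'. destruct Hg' as [r [<- _]]. rewrite length_map, length_seq. auto. }
  unfold Gpred. split; auto. split; [|split; auto].
  - intros g Hg'. split; [auto|]. simpl in Hg'. apply in_map_iff in Hg'. destruct Hg' as [r [<- Hr]].
    apply in_seq in Hr. destruct Hv as [Hm [_ [_ H4]]]. destruct (H4 r ltac:(lia)) as [a [Ha [Har Hj]]].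
    set (b := a / k). assert (Ea : a = b * k + r) by (unfold b; rewrite <- Har, Nat.mul_comm; apply Nat.div_mod_eq).
    assert (Hb : b < q) by nia.
    rewrite list_sum_map_seq. assert (H := sumn_mono (fun i => dl (S ((0 + i) * k + r)) - dl ((0 + i) * k + r)) (S b) q ltac:(lia)).
    simpl in H. rewrite <- Ea in H. simpl. lia.
  - assert (HR := regroup k q p _ _ ltac:(lia) ltac:(lia) ltac:(lia) Hlg Hgq Hlf).
    rewrite (sumn_last _ (k * q)) in HR by nia.
    rewrite (sumn_ext _ (fun a => dl (S a) - dl a)) in HR by (intros; apply xj_builder; auto).
    replace (nth 0 (snd (builder d k q p dl)) 0) with (dl 0) in HR by reflexivity.
    rewrite Nat.add_assoc, telescope in HR by (intros i Hi; destruct Hv as [Hm _]; apply Hm; lia).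
    assert (Hlast : xj k q p (fst (builder d k q p dl)) (snd (builder d k q p dl)) (k * q - 1) = d - 1 - dl (k * q - 1)).
    { unfold xj. rewrite (nm1_mod d k q p Hh), Nat.ltb_irrefl.
      replace (k * q - 1) with ((q - 1) * k + (k - 1)) at 1 2 by nia.
      destruct (divmod_bk (q - 1) k (k - 1) ltac:(lia)) as [E1 _]. rewrite E1.
      destruct (Nat.eqb_spec (q - 1) (q - p - 1)); [lia|]. simpl snd.
      replace (S (q - 1)) with (S (q - 1)) by reflexivity. simpl nth.
      rewrite app_nth2 by (rewrite length_map, length_seq; lia). rewrite length_map, length_seq, Nat.sub_diag. simpl. lia. }
    rewrite Hlast in HR. destruct Hv as [_ [H2 _]]. lia.
Qed.

Lemma builder_of_Phi d k q p x : Hyp d k q p -> Gpred q (k - 1) (d - 2) x ->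
  builder d k q p (Phi k q p x) = x.
Proof.
  intros Hh Hx. assert (Hh' := Hh). destruct Hh' as (Hd & Hk & Hq & Hp & Hg).
  destruct x as [gs f]. destruct Hx as [H1 [H2 [H3 H4]]]. simpl in *.
  assert (HR := regroup k q p gs f ltac:(lia) ltac:(lia) ltac:(lia) H1 (fun g Hg => proj1 (H2 g Hg)) H3).
  assert (HX : forall a, Phi k q p (gs, f) (S a) - Phi k q p (gs, f) a = xj k q p gs f a).
  { intros a. unfold Phi. simpl. lia. }
  unfold builder. f_equal.
  - apply nth_ext with (d := nil) (d' := nil).
    + rewrite length_map, length_seq. auto.
    + intros r Hr. rewrite length_map, length_seq in Hr. rewrite nth_map_seq by auto.
      assert (Hin : In (nth r gs nil) gs) by (apply nth_In; lia).
      apply nth_ext with (d := 0) (d' := 0).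
      * rewrite length_map, length_seq. symmetry. apply H2; auto.
      * intros b Hb. rewrite length_map, length_seq in Hb. rewrite nth_map_seq by auto.
        rewrite HX. unfold xj. destruct (divmod_bk b k r ltac:(lia)) as [E1 E2]. rewrite E1, E2.
        replace (r <? k - 1) with true by (symmetry; apply Nat.ltb_lt; lia). reflexivity.
  - apply nth_ext with (d := 0) (d' := 0).
    + simpl. rewrite length_app, length_map, length_seq. simpl. lia.
    + intros i Hi. simpl in Hi. rewrite length_app, length_map, length_seq in Hi. simpl in Hi.
      destruct i as [|i].
      * unfold Phi. simpl. lia.
      * simpl nth. destruct (Nat.lt_ge_cases i (q - 1)).
        -- rewrite app_nth1 by (rewrite length_map, length_seq; auto). rewrite nth_map_seq by auto.
           rewrite HX. unfold xj. destruct (divmod_bk i k (k - 1) ltac:(lia)) as [E1 E2]. rewrite E1, E2, Nat.ltb_irrefl. lia.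
        -- rewrite app_nth2 by (rewrite length_map, length_seq; auto). rewrite length_map, length_seq.
           replace (i - (q - 1)) with 0 by lia. simpl. replace i with (q - 1) by lia.
           rewrite (sumn_last _ (k * q)) in HR by nia.
           unfold Phi. cbn [fst snd].
           assert (Hl : xj k q p gs f (k * q - 1) = nth q f 0).
           { unfold xj. rewrite (nm1_mod d k q p Hh), Nat.ltb_irrefl.
             replace (k * q - 1) with ((q - 1) * k + (k - 1)) at 1 2 by nia.
             destruct (divmod_bk (q - 1) k (k - 1) ltac:(lia)) as [E1 _]. rewrite E1.
             destruct (Nat.eqb_spec (q - 1) (q - p - 1)); [lia|]. replace (S (q - 1)) with q by lia. lia. }
           rewrite Hl in HR. replace (S (q - 1)) with q by lia. lia.
Qed.

End Part8.


Lemma builder_ext d k q p dl dl' : Hyp d k q p -> (forall j, (j < k * q)%nat -> dl j = dl' j) ->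
  builder d k q p dl = builder d k q p dl'.
Proof.
  intros Hh H. assert (Hh' := Hh). destruct Hh' as (Hd & Hk & Hq & Hp & Hg).
  unfold builder. f_equal.
  - apply map_ext_in. intros r Hr. apply in_seq in Hr. apply map_ext_in. intros b Hb. apply in_seq in Hb.
    rewrite !H by nia. reflexivity.
  - rewrite (H 0%nat) by nia. rewrite (H (k * q - 1)%nat) by nia. f_equal. f_equal.
    apply map_ext_in. intros b Hb. apply in_seq in Hb. rewrite !H by nia. reflexivity.
Qed.

Lemma binom_diag n : binom n n = 1%nat.
Proof. induction n; simpl; auto. rewrite IHn, binom_gt; lia. Qed.

Lemma count_k d k q p : Hyp d k q p ->
  has_count (rot_set_k d p q k) (G q (k - 1) (d - 2)).
Proof.
  intros Hh. assert (Hh' := Hh). destruct Hh' as (Hd & Hk & Hq & Hp & Hg).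
  exists (map (fun x => Ulist d k q p (Phi k q p x)) (Gs q (k - 1) (d - 2))).
  split; [|split].
  - apply NoDup_map_inj; [apply Gs_nodup|].
    intros x y Hx Hy E. apply Gs_spec in Hx, Hy.
    rewrite <- (builder_of_Phi d k q p x), <- (builder_of_Phi d k q p y) by auto.
    apply builder_ext; auto. apply (Ulist_inj d k q p); auto.
  - intros u. rewrite in_map_iff. split.
    + intros [x [<- Hx]]. apply Gs_spec in Hx. apply valid_rot; auto. apply Phi_valid; auto.
    + intros Hu. destruct (nec d k q p u Hh Hu) as [dl [Hv ->]].
      exists (builder d k q p dl). split.
      * apply Ulist_ext; [nia|]. apply builder_Phi; auto.
      * apply Gs_spec. apply builder_in; auto.
  - rewrite length_map. reflexivity.
Qed.

Theorem theorem3p6 (d q p : nat) :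
  (2 <= d)%nat -> (2 <= q)%nat -> (1 <= p <= q - 1)%nat -> Nat.gcd p q = 1%nat ->
  exists N : nat -> nat,
    (forall k, (1 <= k <= d - 1)%nat -> has_count (rot_set_k d p q k) (N k)) /\
    N 1%nat = binom (d - 2 + q) (d - 2) /\
    (forall k, (2 <= k <= d - 1)%nat ->
       (N k + rec_sum N k)%nat = binom (d - 2 + k * q) (d - 2)).
Proof.
  intros Hd Hq Hp Hg.
  exists (fun k => G q (k - 1) (d - 2)). split; [|split].
  - intros k Hk. apply count_k. unfold Hyp. repeat split; lia.
  - simpl. rewrite G_0, stars_bars. reflexivity.
  - intros k Hk. unfold rec_sum. fold (list_sum (map (fun j => (binom (k - 1) (j - 1) * G q (j - 1) (d - 2))%nat) (seq 1 (k - 1)))).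
    rewrite list_sum_map_seq.
    assert (HI := G_identity q (k - 1) (d - 2)).
    replace (S (k - 1)) with k in HI by lia.
    rewrite (sumn_last _ k) in HI by lia.
    rewrite binom_diag in HI.
    replace ((k - 1) * q + S q)%nat with (S (k * q)) in HI by nia.
    rewrite stars_bars in HI.
    rewrite (sumn_ext _ (fun i => binom (k - 1) i * G q i (d - 2))%nat).
    + lia.
    + intros i _. replace (1 + i - 1)%nat with i by lia. reflexivity.
Qed.
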